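(* Let $\mathfrak{A}\subset\mathfrak{F}=\mathbb{C}(x_1,\ldots,x_n)$ be the cluster algebra of geometric type defined by an initial seed $(\mathbf{x},B)$, $\mathbf{x}=(x_1,\ldots,x_n)$, where $B=(b_{ij})$ is an $m\times n$ integer matrix ($m\le n$) whose principal $m\times m$ submatrix is skew-symmetrizable, and let $\Lambda=(\lambda_{ij})$ be a skew-symmetric $n\times n$ matrix such that the log-canonical Poisson bracket $\{x_i,x_j\}_\Lambda=\lambda_{ij}x_ix_j$ (extended to $\mathfrak{F}$) is compatible with $\mathfrak{A}$. Then $\{\cdot,\cdot\}_\Lambda$ restricts to a Poisson algebra structure on the upper bound $\mathcal{U}_{\mathbf{x},B}(\mathfrak{A})$ and on the upper cluster algebra $\mathcal{U}(\mathfrak{A})$; i.e. both are closed under $\{\cdot,\cdot\}_\Lambda$.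
   Context: Cluster mutation: for $1\le i\le m$ the exchange polynomial is $P_i=\prod_{k=1}^n x_k^{\max(b_{ik},0)}+\prod_{k=1}^n x_k^{-\min(b_{ik},0)}$, and $y_i\in\mathfrak{F}$ is defined by $x_iy_i=P_i$; the new extended cluster is $(x_1,\ldots,x_{i-1},y_i,x_{i+1},\ldots,x_n)$, with exchange matrix obtained by the usual Fomin–Zelevinsky matrix mutation; $x_{m+1},\ldots,x_n$ are frozen and never mutated. The cluster algebra is the subalgebra of $\mathfrak{F}$ generated by all cluster variables of all seeds mutation equivalent to $(\mathbf{x},B)$. A Poisson bracket on $\mathfrak{F}$ is log-canonical with respect to an extended cluster $(z_1,\ldots,z_n)$ if $\{z_i,z_j\}=c_{ij}z_iz_j$ with $c_{ij}\in\mathbb{C}$; it is compatible with $\mathfrak{A}$ if it is log-canonical with respect to every extended cluster. The upper bound is $\mathcal{U}_{\mathbf{x},B}(\mathfrak{A})=\bigcap_{j=1}^m\mathbb{C}[x_1^{\pm1},\ldots,x_{j-1}^{\pm1},x_j,y_j,x_{j+1}^{\pm1},\ldots,x_m^{\pm1},x_{m+1},\ldots,x_n]$, and the upper cluster algebra $\mathcal{U}(\mathfrak{A})$ is the intersection of the upper bounds $\mathcal{U}_{\mathbf{x}',B'}(\mathfrak{A})$ over all seeds $(\mathbf{x}',B')$ mutation equivalent to $(\mathbf{x},B)$. *)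

(* Defs.v *)
From HB Require Import structures.
From mathcomp Require Import all_boot all_order all_algebra.
From mathcomp Require Import mpoly.
Set Implicit Arguments. Unset Strict Implicit. Unset Printing Implicit Defensive.
Import Order.TTheory GRing.Theory Num.Theory.
Local Open Scope ring_scope.

Definition ratfun (K : numClosedFieldType) (n : nat) : fieldType :=
  {fraction {mpoly K[n]}}.

Section Cluster.
Variables (K : numClosedFieldType) (m n : nat) (hmn : (m <= n)%N).
Local Notation F := (ratfun K n).

Definition kF (c : K) : F := @FracField.tofrac _ (c%:MP).
Definition xvar (i : 'I_n) : F := @FracField.tofrac _ 'X_i.

Definition seed := ((('I_n -> F) * 'M[int]_(m, n))%type).

Definition col (k : 'I_m) : 'I_n := widen_ord hmn k.

Definition skew_symmetrizable (B : 'M[int]_(m, n)) : Prop :=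
  exists d : 'I_m -> int, (forall i, 0 < d i) /\
    forall i j : 'I_m, d i * B i (col j) = - (d j * B j (col i)).

Definition exch_poly (x : 'I_n -> F) (B : 'M[int]_(m, n)) (k : 'I_m) : F :=
  \prod_(l < n) x l ^+ `|Num.max (B k l) 0|%N
  + \prod_(l < n) x l ^+ `|- Num.min (B k l) 0|%N.

Definition new_var (x : 'I_n -> F) (B : 'M[int]_(m, n)) (k : 'I_m) : F :=
  exch_poly x B k / x (col k).

Definition mut_mx (B : 'M[int]_(m, n)) (k : 'I_m) : 'M[int]_(m, n) :=
  \matrix_(i < m, j < n)
    if (i == k) || (j == col k) then - B i j
    else B i j + ((`|B i (col k)| * B k j + B i (col k) * `|B k j|) %/ 2)%Z.

Definition mutate (s : seed) (k : 'I_m) : seed :=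
  let: (x, B) := s in
  ((fun j => if j == col k then new_var x B k else x j), mut_mx B k).

Definition mutate_seq (s : seed) (ks : seq 'I_m) : seed := foldl mutate s ks.

Inductive in_subalg (gens : F -> Prop) : F -> Prop :=
| sa_const c : in_subalg gens (kF c)
| sa_gen g : gens g -> in_subalg gens g
| sa_add f g : in_subalg gens f -> in_subalg gens g -> in_subalg gens (f + g)
| sa_mul f g : in_subalg gens f -> in_subalg gens g -> in_subalg gens (f * g).

(* generators of C[x_1^{±1},...,x_{j-1}^{±1},x_j,y_j,x_{j+1}^{±1},...,x_m^{±1},x_{m+1},...,x_n] *)
Definition upper_gens (s : seed) (j : 'I_m) (f : F) : Prop :=
  let: (x, B) := s in
  [\/ f = x (col j), f = new_var x B j |
      exists i : 'I_n, i != col j /\ (f = x i \/ ((i < m)%N /\ f = (x i)^-1))].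

Definition upper_bound (s : seed) (f : F) : Prop :=
  forall j : 'I_m, in_subalg (upper_gens s j) f.

Definition upper_cluster_algebra (s : seed) (f : F) : Prop :=
  forall ks : seq 'I_m, upper_bound (mutate_seq s ks) f.

Definition log_canonical (br : F -> F -> F) (z : 'I_n -> F) : Prop :=
  forall i j : 'I_n, exists c : K, br (z i) (z j) = kF c * z i * z j.

Definition compatible (br : F -> F -> F) (s : seed) : Prop :=
  forall ks : seq 'I_m, log_canonical br (mutate_seq s ks).1.

End Cluster.
Arguments xvar {K n}.
Arguments kF {K} n c.

(* br is the K-bilinear Poisson bracket on F with {x_i,x_j} = lambda_ij x_i x_j
   (there is exactly one such bracket: the extension of the log-canonical one to F) *)
Definition is_log_canonical_bracket (K : numClosedFieldType) (n : nat)
    (Lam : 'M[K]_n) (br : ratfun K n -> ratfun K n -> ratfun K n) : Prop :=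
  [/\ forall f g, br f g = - br g f,
      forall c f g h, br f (kF n c * g + h) = kF n c * br f g + br f h,
      forall f g h, br f (g * h) = br f g * h + g * br f h,
      forall f g h, br f (br g h) + br g (br h f) + br h (br f g) = 0 &
      forall i j, br (xvar i) (xvar j) = kF n (Lam i j) * xvar i * xvar j].

Definition closed_under (K : numClosedFieldType) (n : nat)
    (br : ratfun K n -> ratfun K n -> ratfun K n) (S : ratfun K n -> Prop) : Prop :=
  forall f g, S f -> S g -> S (br f g).

(* Main.v *)
Require Import Defs.
From HB Require Import structures.
From mathcomp Require Import all_boot all_order all_algebra.
From mathcomp Require Import mpoly.
From mathcomp Require Import ring.
Import Order.TTheory GRing.Theory Num.Theory.
Local Open Scope ring_scope.

Lemma kF0 (K : numClosedFieldType) n : kF n (0 : K) = 0.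
Proof. by rewrite /kF mpolyC0 rmorph0. Qed.
Lemma kF1 (K : numClosedFieldType) n : kF n (1 : K) = 1.
Proof. by rewrite /kF mpolyC1 rmorph1. Qed.
Lemma kFN (K : numClosedFieldType) n (c : K) : kF n (- c) = - kF n c.
Proof. by rewrite /kF mpolyCN rmorphN. Qed.

Definition LC (K : numClosedFieldType) n (br : ratfun K n -> ratfun K n -> ratfun K n)
  (u v : ratfun K n) := exists c : K, br u v = kF n c * u * v.

Section Br.
Variables (K : numClosedFieldType) (n : nat).
Local Notation F := (ratfun K n).
Variable br : F -> F -> F.
Hypothesis Hanti : forall f g, br f g = - br g f.
Hypothesis Hlin : forall c f g h, br f (kF n c * g + h) = kF n c * br f g + br f h.
Hypothesis Hleib : forall f g h, br f (g * h) = br f g * h + g * br f h.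

Lemma br0 f : br f 0 = 0.
Proof. by move: (Hleib f 0 0); rewrite !(mulr0, mul0r, addr0). Qed.
Lemma br1 f : br f 1 = 0.
Proof.
move: (Hleib f 1 1); rewrite !(mulr1, mul1r).
by move=> /(congr1 (fun y => y - br f 1)); rewrite subrr addrK.
Qed.
Lemma brD f g h : br f (g + h) = br f g + br f h.
Proof. by move: (Hlin 1 f g h); rewrite kF1 !mul1r. Qed.
Lemma brC f c : br f (kF n c) = 0.
Proof. by move: (Hlin c f 1 0); rewrite mulr1 addr0 br1 br0 mulr0 addr0. Qed.
Lemma brCl f c : br (kF n c) f = 0.
Proof. by rewrite Hanti brC oppr0. Qed.
Lemma brDl f g h : br (f + g) h = br f h + br g h.
Proof. by rewrite Hanti brD opprD -!Hanti. Qed.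
Lemma brMl f g h : br (f * g) h = br f h * g + f * br g h.
Proof. by rewrite Hanti Hleib opprD -mulNr -mulrN -!Hanti. Qed.

Lemma LC_sym u v : @LC K n br u v -> @LC K n br v u.
Proof. by case=> c Hc; exists (- c); rewrite Hanti Hc kFN; ring. Qed.

Lemma LC_inv u v : @LC K n br u v -> @LC K n br u v^-1.
Proof.
case=> c Hc; exists (- c).
have [->|vnz] := eqVneq v 0; first by rewrite invr0 br0 mulr0.
have E : v * br u v^-1 = - (kF n c * u).
  move: (Hleib u v v^-1); rewrite divff // br1 Hc.
  have -> : kF n c * u * v * v^-1 = kF n c * u by rewrite -mulrA divff // mulr1.
  by move/esym/eqP; rewrite addrC addr_eq0 => /eqP.
by rewrite -[br u v^-1](mulKf vnz) E kFN; ring.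
Qed.

Lemma LC_invl u v : @LC K n br u v -> @LC K n br u^-1 v.
Proof. by move=> H; apply: LC_sym; apply: LC_inv; apply: LC_sym. Qed.

Lemma sub0 (G : F -> Prop) : in_subalg G 0.
Proof. by rewrite -(kF0 K n); constructor. Qed.
Lemma sub1 (G : F -> Prop) : in_subalg G 1.
Proof. by rewrite -(kF1 K n); constructor. Qed.
Lemma subN (G : F -> Prop) f : in_subalg G f -> in_subalg G (- f).
Proof.
move=> Hf; have -> : - f = kF n (-1) * f by rewrite kFN kF1 mulN1r.
by apply: sa_mul => //; constructor.
Qed.

Lemma sub_lift (G G' : F -> Prop) : (forall g, G g -> in_subalg G' g) ->
  forall f, in_subalg G f -> in_subalg G' f.
Proof.
move=> HG f; elim => [c|g Gg|f1 f2 _ IH1 _ IH2|f1 f2 _ IH1 _ IH2].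
- constructor.
- exact: HG.
- exact: sa_add.
- exact: sa_mul.
Qed.

Lemma br_gen_closed (G : F -> Prop) :
  (forall g h, G g -> G h -> in_subalg G (br g h)) ->
  forall f g, in_subalg G f -> in_subalg G g -> in_subalg G (br f g).
Proof.
move=> HG.
have L1 : forall a, G a -> forall f, in_subalg G f -> in_subalg G (br a f).
  move=> a Ga f; elim => [c|g Gg|f1 f2 _ IH1 _ IH2|f1 f2 H1 IH1 H2 IH2].
  - by rewrite brC; apply: sub0.
  - exact: HG.
  - by rewrite brD; apply: sa_add.
  - by rewrite Hleib; apply: sa_add; apply: sa_mul.
move=> f g Hf; elim: Hf g => [c|a Ga|f1 f2 H1 IH1 H2 IH2|f1 f2 H1 IH1 H2 IH2] g Hg.
- by rewrite brCl; apply: sub0.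
- exact: L1.
- by rewrite brDl; apply: sa_add; auto.
- by rewrite brMl; apply: sa_add; apply: sa_mul; auto.
Qed.

Lemma br_deriv (a : F) (G G' : F -> Prop) :
  (forall g, G g -> @LC K n br a g) -> (forall g, G g -> in_subalg G' g) ->
  forall f, in_subalg G f -> exists h, in_subalg G' h /\ br a f = a * h.
Proof.
move=> HL HG f; elim => [c|g Gg|f1 f2 _ [h1 [S1 E1]] _ [h2 [S2 E2]]|
   f1 f2 F1 [h1 [S1 E1]] F2 [h2 [S2 E2]]].
- by exists 0; split; [apply: sub0 | rewrite brC mulr0].
- case: (HL g Gg) => c Hc; exists (kF n c * g); split.
    by apply: sa_mul; [constructor | apply: HG].
  by rewrite Hc; ring.
- by exists (h1 + h2); split; [apply: sa_add | rewrite brD E1 E2 mulrDr].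
- exists (h1 * f2 + f1 * h2); split.
    apply: sa_add; apply: sa_mul => //.
      exact: (@sub_lift G G' HG _ F2).
    exact: (@sub_lift G G' HG _ F1).
  by rewrite Hleib E1 E2; ring.
Qed.

Lemma sub_expr (G : F -> Prop) u e : in_subalg G u -> in_subalg G (u ^+ e).
Proof.
move=> Hu; elim: e => [|e IH]; first by rewrite expr0; apply: sub1.
by rewrite exprS; apply: sa_mul.
Qed.

Lemma seed_closed m (hmn : (m <= n)%N) (x : 'I_n -> F) (B : 'M[int]_(m, n)) (j : 'I_m) :
  log_canonical br x -> log_canonical br (mutate hmn (x, B) j).1 ->
  forall f g, in_subalg (upper_gens hmn (x, B) j) f ->
    in_subalg (upper_gens hmn (x, B) j) g ->
    in_subalg (upper_gens hmn (x, B) j) (br f g).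
Proof.
move=> H1 H2; apply: br_gen_closed.
pose S := in_subalg (upper_gens hmn (x, B) j).
pose z := (mutate hmn (x, B) j).1.
have Sx : forall i, S (x i).
  move=> i; apply: sa_gen; rewrite /upper_gens.
  have [->|ne] := eqVneq i (Defs.col hmn j); first by apply: Or31.
  by apply: Or33; exists i; split; [exact: ne | left].
have Sy : S (new_var hmn x B j) by apply: sa_gen; apply: Or32.
have SLC : forall g h, S g -> S h -> @LC K n br g h -> S (br g h).
  move=> g h Sg Sh [c ->]; apply: sa_mul => //; apply: sa_mul => //; constructor.
have zx : forall i, i != Defs.col hmn j -> z i = x i.
  by move=> i ne; rewrite /z /= (negbTE ne).
have zy : z (Defs.col hmn j) = new_var hmn x B j by rewrite /z /= eqxx.
pose Zs g := exists i, g = z i.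
pose E g := Zs g \/ exists u, Zs u /\ g = u^-1.
have LZ : forall g h, Zs g -> Zs h -> @LC K n br g h.
  by move=> g h [i ->] [l ->]; apply: H2.
have LE : forall g h, E g -> E h -> @LC K n br g h.
  move=> g h [Zg|[u [Zu ->]]] [Zh|[v [Zv ->]]].
  - exact: LZ.
  - by apply: LC_inv; apply: LZ.
  - by apply: LC_invl; apply: LZ.
  - by apply: LC_invl; apply: LC_inv; apply: LZ.
have cls : forall g, upper_gens hmn (x, B) j g -> g = x (Defs.col hmn j) \/ E g.
  move=> g; case=> [->|->|[i [ne [->|[_ ->]]]]].
  - by left.
  - by right; left; exists (Defs.col hmn j).
  - by right; left; exists i; rewrite zx.
  - by right; right; exists (x i); split => //; exists i; rewrite zx.
pose a := x (Defs.col hmn j).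
have Ba : forall h, upper_gens hmn (x, B) j h -> S (br a h).
  move=> h; case=> [->|->|[i [ne [->|[lt ->]]]]].
  - by apply: SLC; [exact: Sx | exact: Sx | exact: H1].
  - rewrite /new_var.
    have [az|anz] := eqVneq a 0.
      by rewrite -/a az invr0 mulr0 br0; apply: sub0.
    rewrite -/a Hleib.
    have HP : in_subalg (fun g => exists l, g = x l) (exch_poly x B j).
      rewrite /exch_poly; apply: sa_add; apply: big_ind => [|u v|l _].
      - exact: sub1.
      - exact: sa_mul.
      - by apply: sub_expr; apply: sa_gen; exists l.
      - exact: sub1.
      - exact: sa_mul.
      - by apply: sub_expr; apply: sa_gen; exists l.
    have HGL : forall g, (exists l, g = x l) -> @LC K n br a g.
      by move=> g [l ->]; apply: H1.
    have HGS : forall g, (exists l, g = x l) -> S g.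
      by move=> g [l ->]; apply: Sx.
    have [h0 [Sh Eh]] := @br_deriv a _ (upper_gens hmn (x, B) j) HGL HGS _ HP.
    have [c Hc] : @LC K n br a a^-1 by apply: LC_inv; apply: H1.
    rewrite Eh -/a Hc.
    have -> : a * h0 * a^-1 + exch_poly x B j * (kF n c * a * a^-1)
        = h0 + kF n c * exch_poly x B j.
      have -> : a * h0 * a^-1 = h0 by rewrite mulrAC divff // mul1r.
      have -> : kF n c * a * a^-1 = kF n c by rewrite -mulrA divff // mulr1.
      by rewrite [exch_poly _ _ _ * _]mulrC.
    apply: sa_add => //; apply: sa_mul; first constructor.
    exact: (@sub_lift _ _ HGS _ HP).
  - by apply: SLC; [exact: Sx | exact: Sx | exact: H1].
  - apply: SLC; first exact: Sx.
      by apply: sa_gen; apply: Or33; exists i; split => //; right; split.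
    by apply: LC_inv; apply: H1.
move=> g h Gg Gh.
case: (cls g Gg) => [->|Eg]; first exact: Ba.
have Sg : S g by apply: sa_gen.
case: (cls h Gh) => [->|Eh].
  by rewrite Hanti; apply: subN; apply: Ba.
by apply: SLC => //; [apply: sa_gen | apply: LE].
Qed.

End Br.

Theorem mainTheorem1 (K : numClosedFieldType) (m n : nat) (hmn : (m <= n)%N)
    (B : 'M[int]_(m, n)) (Lam : 'M[K]_n)
    (br : ratfun K n -> ratfun K n -> ratfun K n) :
  skew_symmetrizable hmn B ->
  Lam^T = - Lam ->
  is_log_canonical_bracket Lam br ->
  compatible hmn br (xvar, B) ->
  closed_under br (upper_bound hmn (xvar, B)) /\
  closed_under br (upper_cluster_algebra hmn (xvar, B)).
Proof.
move=> _ _ [Hanti Hlin Hleib _ _] Hcomp.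
have gen : forall ks, closed_under br (upper_bound hmn (mutate_seq hmn (xvar, B) ks)).
  move=> ks f g Hf Hg j.
  move: Hf Hg (Hcomp ks) (Hcomp (rcons ks j)).
  rewrite /mutate_seq foldl_rcons.
  case: (foldl (mutate hmn) (xvar, B) ks) => x B' Hf Hg H1 H2.
  exact: (@seed_closed K n br Hanti Hlin Hleib m hmn x B' j H1 H2 f g (Hf j) (Hg j)).
split; first exact: (gen [::]).
by move=> f g Hf Hg ks; apply: gen; [apply: Hf | apply: Hg].
Qed.
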